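(* Fix $\zeta\in Z$ and let $(k_c,k_e)$ be a pair of monotone decreasing kinetic functions (as defined in the context), with associated numbers $\tau_\ell^{sc}$ and $\tau_v^{sc}:=k_c(\tau_\ell^{sc})$. (a) For every fixed $\tau_R\in(\tau_v^{\min},\tau_v^{sc}]$ there exists a unique $\hat\tau\in\mathcal A_\ell$ such that $$p'(\tau_R)=\frac{p(\tau_R)-p(\hat\tau)-\zeta}{\tau_R-\hat\tau},$$ or equivalently $c(\tau_R)=s_c(\hat\tau,\tau_R)$. Moreover $\hat\tau\in(\tau_\ell^{\min},\tau_\ell^{sc}]$. (b) For every fixed $\tau_R>\tau_v^{sc}$ there exists a unique $\check\tau$ in the domain $[\tau_\ell^{sc},\tau_\ell^{sat}]\subset\mathcal A_\ell$ of $k_c$ such that $$\frac{p(k_c(\check\tau))-p(\check\tau)-\zeta}{k_c(\check\tau)-\check\tau}=\frac{p(\tau_R)-p(\check\tau)-\zeta}{\tau_R-\check\tau},$$ or equivalently $s_c(\check\tau,k_c(\check\tau))=s_c(\check\tau,\tau_R)$. Moreover $\check\tau\in(\tau_\ell^{sc},\tau_\ell^{sat})$.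
   Context: Thermodynamic setting. Fix real numbers $0<\tau_\ell^{\min}<\tau_\ell^{\max}<\tau_v^{\min}$ and $\zeta^{\min}<0<\zeta^{\max}$. Set $\mathcal A_\ell=(\tau_\ell^{\min},\tau_\ell^{\max})$, $\mathcal A_v=(\tau_v^{\min},\infty)$ and $Z=(\zeta^{\min},\zeta^{\max})$. Let $p\in C^2(\mathcal A_\ell\cup\mathcal A_v)$ and $\psi,\mu\in C^3(\mathcal A_\ell\cup\mathcal A_v)$ with $p=-\psi'$ and $\mu=\psi+p\tau$. Assume: (H1) $p'<0$; (H2) $p''>0$ on $\mathcal A_\ell\cup\mathcal A_v$; (H3) for every $\zeta\in Z$ there exist $\tau_\ell^{sat}(\zeta)\in\mathcal A_\ell$, $\tau_v^{sat}(\zeta)\in\mathcal A_v$ with $p(\tau_v^{sat})-p(\tau_\ell^{sat})=\zeta$, $\mu(\tau_v^{sat})=\mu(\tau_\ell^{sat})$; (H4) $p(\tau)\to\infty$ as $\tau\to\tau_\ell^{\min}$; (H5) $p'(\tau_\ell)<p'(\tau_v)$ for all $\tau_\ell\in\mathcal A_\ell,\tau_v\in\mathcal A_v$; (H6) $\int_{\tau_v^{\min}}^R c\,d\tau\to\infty$ as $R\to\infty$, where $c(\tau)=\sqrt{-p'(\tau)}$. For the fixed $\zeta$ write $\tau_\ell^{sat}=\tau_\ell^{sat}(\zeta)$, $\tau_v^{sat}=\tau_v^{sat}(\zeta)$. Speeds: $s_e(\tau_\ell,\tau_v)=-\sqrt{\frac{\zeta-p(\tau_v)+p(\tau_\ell)}{\tau_v-\tau_\ell}}$,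 $s_c(\tau_\ell,\tau_v)=+\sqrt{\frac{\zeta-p(\tau_v)+p(\tau_\ell)}{\tau_v-\tau_\ell}}$. Driving force: $f(\tau_\ell,\tau_v)=\psi(\tau_v)-\psi(\tau_\ell)+(\tau_v-\tau_\ell)\frac{p(\tau_\ell)+p(\tau_v)}2+\zeta\frac{\tau_\ell+\tau_v}2$. Pair of monotone decreasing kinetic functions: given numbers $\tau_\ell^{sc}\in(\tau_\ell^{\min},\tau_\ell^{sat})$, $\tau_v^{se}\in(\tau_v^{\min},\infty)$ and differentiable functions $k_c:[\tau_\ell^{sc},\tau_\ell^{sat}]\to\mathcal A_v$, $k_e:[\tau_v^{sat},\tau_v^{se}]\to\mathcal A_\ell$ such that $k_c'\le0$, $k_e'\le0$; $f(\tau_\ell,k_c(\tau_\ell))\ge0$ for all $\tau_\ell\in[\tau_\ell^{sc},\tau_\ell^{sat}]$ and $f(k_e(\tau_v),\tau_v)\le0$ for all $\tau_v\in[\tau_v^{sat},\tau_v^{se}]$; $k_c(\tau_\ell^{sat})=\tau_v^{sat}$, $k_c(\tau_\ell^{sc})=\tau_v^{sc}$ with $|s_c(\tau_\ell^{sc},\tau_v^{sc})|=c(\tau_v^{sc})$; $k_e(\tau_v^{sat})=\tau_\ell^{sat}$, $k_e(\tau_v^{se})=\tau_\ell^{se}$ with $|s_e(\tau_\ell^{se},\tau_v^{se})|=c(\tau_v^{se})$, and $k_e'(\tau_v^{se})=0$. *)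

(* Defs.v *)
From Stdlib Require Import Reals.
From Coquelicot Require Import Coquelicot.
Open Scope R_scope.

Definition Al (tlmin tlmax t : R) : Prop := tlmin < t < tlmax.
Definition Av (tvmin t : R) : Prop := tvmin < t.
Definition Dom (tlmin tlmax tvmin t : R) : Prop := Al tlmin tlmax t \/ Av tvmin t.

Definition C2_on (D : R -> Prop) (f : R -> R) : Prop :=
  forall t, D t -> ex_derive f t /\ ex_derive (Derive f) t /\ continuous (Derive_n f 2) t.
Definition C3_on (D : R -> Prop) (f : R -> R) : Prop :=
  forall t, D t -> ex_derive f t /\ ex_derive (Derive f) t /\
    ex_derive (Derive_n f 2) t /\ continuous (Derive_n f 3) t.

Definition mu (p psi : R -> R) (t : R) : R := psi t + p t * t.
Definition cs (p : R -> R) (t : R) : R := sqrt (- Derive p t).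
Definition s_e (p : R -> R) (z tl tv : R) : R := - sqrt ((z - p tv + p tl) / (tv - tl)).
Definition s_c (p : R -> R) (z tl tv : R) : R := sqrt ((z - p tv + p tl) / (tv - tl)).
Definition drive (p psi : R -> R) (z tl tv : R) : R :=
  psi tv - psi tl + (tv - tl) * ((p tl + p tv) / 2) + z * ((tl + tv) / 2).

(* Standing thermodynamic assumptions (H1)-(H6); tlsat, tvsat are the
   saturation-state functions of zeta from (H3). *)
Definition thermo_setting (tlmin tlmax tvmin zmin zmax : R) (p psi tlsat tvsat : R -> R) : Prop :=
  0 < tlmin /\ tlmin < tlmax /\ tlmax < tvmin /\ zmin < 0 /\ 0 < zmax /\
  C2_on (Dom tlmin tlmax tvmin) p /\
  C3_on (Dom tlmin tlmax tvmin) psi /\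
  C3_on (Dom tlmin tlmax tvmin) (mu p psi) /\
  (forall t, Dom tlmin tlmax tvmin t -> Derive psi t = - p t) /\
  (forall t, Dom tlmin tlmax tvmin t -> Derive p t < 0) /\
  (forall t, Dom tlmin tlmax tvmin t -> Derive (Derive p) t > 0) /\
  (forall z, zmin < z < zmax ->
              Al tlmin tlmax (tlsat z) /\ Av tvmin (tvsat z) /\
              p (tvsat z) - p (tlsat z) = z /\
              mu p psi (tvsat z) = mu p psi (tlsat z)) /\
  filterlim p (at_right tlmin) (Rbar_locally p_infty) /\
  (forall tl tv, Al tlmin tlmax tl -> Av tvmin tv -> Derive p tl < Derive p tv) /\
  (* H6: the (possibly improper, nonnegative integrand) integral from tvmin to R of c
         tends to +oo as R -> +oo *)
  (forall M, exists R0, forall Rr, R0 <= Rr ->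
      exists a, tvmin < a < Rr /\ M < RInt (cs p) a Rr).

Definition kinetic_pair (tlmin tlmax tvmin : R) (p psi : R -> R) (z tlsat tvsat : R)
  (tlsc tvsc tvse tlse : R) (kc ke : R -> R) : Prop :=
  tlmin < tlsc < tlsat /\ tvmin < tvse /\ tvsat <= tvse /\
  (forall x, tlsc <= x <= tlsat ->
     ex_derive kc x /\ Derive kc x <= 0 /\ Av tvmin (kc x) /\ drive p psi z x (kc x) >= 0) /\
  (forall x, tvsat <= x <= tvse ->
     ex_derive ke x /\ Derive ke x <= 0 /\ Al tlmin tlmax (ke x) /\ drive p psi z (ke x) x <= 0) /\
  kc tlsat = tvsat /\ kc tlsc = tvsc /\ Rabs (s_c p z tlsc tvsc) = cs p tvsc /\
  ke tvsat = tlsat /\ ke tvse = tlse /\ Rabs (s_e p z tlse tvse) = cs p tvse /\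
  Derive ke tvse = 0.

(* Main.v *)
Require Import Defs.
From Stdlib Require Import Reals.
From Coquelicot Require Import Coquelicot.
From Stdlib Require Import Lra.
Open Scope R_scope.

Lemma mvt_s (f : R -> R) a b : a < b -> (forall x, a <= x <= b -> ex_derive f x) ->
  exists c, a < c < b /\ f b - f a = Derive f c * (b - a).
Proof.
  intros Hab Hd.
  destruct (MVT_cor2 f (Derive f) a b Hab) as [c [Hc1 Hc2]].
  - intros c Hc. apply is_derive_Reals. apply Derive_correct. apply Hd; lra.
  - exists c; split; auto.
Qed.

Lemma cont_of (f : R -> R) x : ex_derive f x -> continuity_pt f x.
Proof.
  intros H. apply continuity_pt_filterlim. apply (ex_derive_continuous f x H).
Qed.

Lemma ivt_loc (f : R -> R) a b : a < b -> (forall x, a <= x <= b -> ex_derive f x) ->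
  f a < 0 -> 0 < f b -> exists c, a <= c <= b /\ f c = 0.
Proof.
  intros Hab Hd Ha Hb.
  destruct (Ranalysis5.IVT_interv f a b) as [c Hc]; auto.
  intros x Hx. apply cont_of; auto.
  exists c; auto.
Qed.

Lemma alg_equiv (Pt Pv PR tR v t z : R): v - t > 0 -> tR - t > 0 -> tR - v > 0 ->
  (PR - (PR - Pv)/(tR - v)*(tR - t) - Pt - z = 0 <->
   (Pv - Pt - z)/(v - t) = (PR - Pt - z)/(tR - t)).
Proof.
  intros H1 H2 H3.
  assert (key : (Pv-Pt-z)/(v-t) - (PR-Pt-z)/(tR-t) =
     (PR - (PR-Pv)/(tR-v)*(tR-t) - Pt - z) * (tR - v) / ((v-t)*(tR-t))).
  { field; lra. }
  split; intros H.
  - rewrite H in key. apply Rminus_diag_uniq. rewrite key. field; lra.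
  - assert (E : (PR - (PR-Pv)/(tR-v)*(tR-t) - Pt - z) * (tR - v) / ((v-t)*(tR-t)) = 0).
    { rewrite <- key, H. ring. }
    assert (E2 : (PR - (PR-Pv)/(tR-v)*(tR-t) - Pt - z) =
       ((PR - (PR-Pv)/(tR-v)*(tR-t) - Pt - z) * (tR - v) / ((v-t)*(tR-t))) * ((v-t)*(tR-t)) / (tR - v)).
    { field; lra. }
    rewrite E2, E. field; lra.
Qed.

Theorem lemma3p5 (tlmin tlmax tvmin zmin zmax : R) (p psi tlsat tvsat : R -> R)
  (z tlsc tvsc tvse tlse : R) (kc ke : R -> R) :
  thermo_setting tlmin tlmax tvmin zmin zmax p psi tlsat tvsat ->
  zmin < z < zmax ->
  kinetic_pair tlmin tlmax tvmin p psi z (tlsat z) (tvsat z) tlsc tvsc tvse tlse kc ke ->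
  (forall tR, tvmin < tR <= tvsc ->
     exists th,
       (Al tlmin tlmax th /\ Derive p tR = (p tR - p th - z) / (tR - th)) /\
       (forall t, Al tlmin tlmax t -> Derive p tR = (p tR - p t - z) / (tR - t) -> t = th) /\
       tlmin < th <= tlsc) /\
  (forall tR, tvsc < tR ->
     exists tc,
       (tlsc <= tc <= tlsat z /\
        (p (kc tc) - p tc - z) / (kc tc - tc) = (p tR - p tc - z) / (tR - tc)) /\
       (forall t, tlsc <= t <= tlsat z ->
          (p (kc t) - p t - z) / (kc t - t) = (p tR - p t - z) / (tR - t) -> t = tc) /\
       tlsc < tc < tlsat z).
Proof.
  intros HT Hz HK.
  destruct HT as (Htl0 & Hl & Hlv & Hzmin & Hzmax & HC2 & HC3psi & HC3mu & Hpsi & H1 & H2 & H3 & H4 & H5 & H6).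
  destruct HK as (Hsc & Hse & Hsatse & Hkc & Hke & Hkcsat & Hkcsc & Hsceq & _).
  destruct (H3 z Hz) as (Hlsat & Hvsat & Hpsat & _).
  unfold Al, Av in *.
  set (tls := tlsat z) in *. set (tvs := tvsat z) in *.
  assert (dAv : forall t, tvmin < t -> ex_derive p t).
  { intros t Ht. apply (HC2 t). right; exact Ht. }
  assert (dAl : forall t, tlmin < t < tlmax -> ex_derive p t).
  { intros t Ht. apply (HC2 t). left; exact Ht. }
  assert (mvAv : forall a b, tvmin < a -> a < b ->
     exists c, a < c < b /\ p b - p a = Derive p c * (b - a)).
  { intros a b Ha Hab. apply mvt_s; auto. intros x Hx; apply dAv; lra. }
  assert (mvAl : forall a b, tlmin < a -> a < b -> b < tlmax ->
     exists c, a < c < b /\ p b - p a = Derive p c * (b - a)).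
  { intros a b Ha Hab Hb. apply mvt_s; auto. intros x Hx; apply dAl; lra. }
  assert (pinc : forall a b, tvmin < a -> a < b -> Derive p a < Derive p b).
  { intros a b Ha Hab. destruct (mvt_s (Derive p) a b Hab) as [c [Hc E]].
    - intros x Hx. apply (HC2 x). right; unfold Av; lra.
    - assert (Derive (Derive p) c > 0) by (apply H2; right; unfold Av; lra).
      assert (0 < Derive (Derive p) c * (b - a)) by (apply Rmult_lt_0_compat; lra).
      lra. }
  assert (H5' : forall a b, tlmin < a < tlmax -> tvmin < b -> Derive p a < Derive p b).
  { intros a b Ha Hb. apply H5; unfold Al, Av; auto. }
  destruct (Hkc tlsc) as (_ & _ & Hvsc & _). lra.
  rewrite Hkcsc in Hvsc. unfold Av in Hvsc.
  assert (kmono : forall t1 t2, tlsc <= t1 -> t1 < t2 -> t2 <= tls -> kc t2 <= kc t1).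
  { intros t1 t2 Ha Hab Hb. destruct (mvt_s kc t1 t2 Hab) as [c [Hc E]].
    - intros x Hx. apply (Hkc x); lra.
    - destruct (Hkc c) as (_ & Hd & _); [lra|].
      assert (Derive kc c * (t2 - t1) <= 0).
      { apply Rmult_le_0_r; lra. }
      lra. }
  assert (Hvsvsc : tvs <= tvsc).
  { rewrite <- Hkcsat, <- Hkcsc. apply kmono; lra. }
  assert (tang : p tvsc - p tlsc - z = Derive p tvsc * (tvsc - tlsc)).
  { assert (Hneg : Derive p tvsc < 0) by (apply H1; right; unfold Av; lra).
    unfold s_c, cs in Hsceq.
    rewrite Rabs_pos_eq in Hsceq by apply sqrt_pos.
    set (X := (z - p tvsc + p tlsc) / (tvsc - tlsc)) in *.
    destruct (Rle_or_lt X 0) as [HX|HX].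
    - rewrite (sqrt_neg_0 X HX) in Hsceq.
      assert (0 < sqrt (- Derive p tvsc)) by (apply sqrt_lt_R0; lra). lra.
    - apply sqrt_inj in Hsceq; try lra.
      unfold X in Hsceq.
      assert (E : z - p tvsc + p tlsc = - Derive p tvsc * (tvsc - tlsc)).
      { rewrite <- Hsceq. field. lra. }
      lra. }
  split.
  -
    intros tR [HtR1 HtR2].
    set (g := fun t => p tR - p t - z - Derive p tR * (tR - t)).
    assert (gmono : forall t1 t2, tlmin < t1 -> t1 < t2 -> t2 < tlmax -> g t1 < g t2).
    { intros t1 t2 Ha Hab Hb. destruct (mvAl t1 t2 Ha Hab Hb) as [c [Hc E]].
      assert (Derive p c < Derive p tR) by (apply H5'; lra).
      assert (0 < (t2 - t1) * (Derive p tR - Derive p c)) by (apply Rmult_lt_0_compat; lra).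
      unfold g. nra. }
    assert (gsc : 0 <= g tlsc).
    { destruct (Req_dec tR tvsc) as [E|E].
      - unfold g. rewrite E. lra.
      - destruct (mvAv tR tvsc) as [c [Hc Ec]]; try lra.
        assert (Derive p c < Derive p tvsc) by (apply pinc; lra).
        assert (Derive p tR < Derive p tvsc) by (apply pinc; lra).
        assert (0 < (tvsc - tR) * (Derive p tvsc - Derive p c)) by (apply Rmult_lt_0_compat; lra).
        assert (0 < (tR - tlsc) * (Derive p tvsc - Derive p tR)) by (apply Rmult_lt_0_compat; lra).
        unfold g. nra. }
    assert (Ha : exists a, tlmin < a < tlsc /\ g a < 0).
    { set (M := p tR - z - Derive p tR * (tR - tlmin)).
      assert (HF : Rbar_locally p_infty (fun y => M < y)) by (exists M; auto).
      specialize (H4 _ HF). destruct H4 as [eps Heps].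
      set (a := tlmin + Rmin eps (tlsc - tlmin) / 2).
      assert (Hm1 : 0 < Rmin eps (tlsc - tlmin)).
      { apply Rmin_pos; [apply cond_pos | lra]. }
      assert (Hm2 : Rmin eps (tlsc - tlmin) <= eps) by apply Rmin_l.
      assert (Hm3 : Rmin eps (tlsc - tlmin) <= tlsc - tlmin) by apply Rmin_r.
      exists a. assert (Hpa : M < p a).
      { apply Heps.
        - unfold ball; simpl; unfold AbsRing_ball, abs, minus, plus, opp; simpl.
          rewrite Rabs_pos_eq; unfold a; lra.
        - unfold a; lra. }
      split; [unfold a; lra|].
      assert (Derive p tR < 0) by (apply H1; right; unfold Av; lra).
      assert (Derive p tR * (tR - tlmin) <= Derive p tR * (tR - a)) by
        (apply Rmult_le_compat_neg_l; unfold a; lra).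
      unfold g, M in *. lra. }
    destruct Ha as [a [Ha1 Ha2]].
    assert (Hex : exists th, a <= th <= tlsc /\ g th = 0).
    { destruct (Req_dec (g tlsc) 0) as [E|E].
      - exists tlsc; split; [lra|auto].
      - apply ivt_loc; try lra.
        intros x Hx. unfold g. assert (ex_derive p x) by (apply dAl; lra). auto_derive. tauto. }
    destruct Hex as [th [Hth Hg]].
    assert (eqv : forall t, tlmin < t < tlmax ->
       (Derive p tR = (p tR - p t - z) / (tR - t) <-> g t = 0)).
    { intros t Ht. unfold g. split; intros E.
      - rewrite E. field. lra.
      - apply Rminus_diag_uniq in E.
        replace (p tR - p t - z) with (Derive p tR * (tR - t)) by lra. field; lra. }
    exists th. split; [split; [lra| apply eqv; auto; lra]|split; [|lra]].
    intros t Ht E. apply eqv in E; auto.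
    destruct (Rtotal_order t th) as [L|[L|L]]; auto.
    + assert (g t < g th) by (apply gmono; lra). lra.
    + assert (g th < g t) by (apply gmono; lra). lra.
  -
    intros tR HtR.
    set (m := fun v => (p tR - p v) / (tR - v)).
    assert (mslope : forall v, tvmin < v -> v < tR -> exists c, v < c < tR /\ m v = Derive p c).
    { intros v Hv1 Hv2. destruct (mvAv v tR Hv1 Hv2) as [c [Hc E]].
      exists c; split; auto. unfold m. rewrite E. field. lra. }
    assert (mmono : forall v1 v2, tvmin < v2 -> v2 <= v1 -> v1 < tR -> m v2 <= m v1).
    { intros v1 v2 Hv2 H12 Hv1. destruct (Req_dec v1 v2) as [E|E].
      - rewrite E; lra.
      - destruct (mvAv v2 v1) as [c1 [Hc1 E1]]; try lra.
        destruct (mslope v1) as [c2 [Hc2 E2]]; try lra.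
        assert (Derive p c1 < Derive p c2) by (apply pinc; lra).
        assert (Em : m v2 * (tR - v2) = m v1 * (tR - v1) + Derive p c1 * (v1 - v2)).
        { unfold m. rewrite <- E1. field. split; lra. }
        rewrite E2 in Em.
        assert (m v2 * (tR - v2) < Derive p c2 * (tR - v2)) by nra.
        rewrite E2. apply Rlt_le. apply Rmult_lt_reg_r with (tR - v2); lra. }
    assert (kr : forall t, tlsc <= t <= tls -> tvmin < kc t /\ kc t <= tvsc).
    { intros t Ht. destruct (Hkc t) as (_ & _ & Hv & _); [lra|]. split; auto.
      destruct (Req_dec t tlsc) as [E|E].
      - rewrite E, Hkcsc; lra.
      - rewrite <- Hkcsc. apply kmono; lra. }
    set (Psi := fun t => p tR - m (kc t) * (tR - t) - p t - z).
    assert (Pmono : forall t1 t2, tlsc <= t1 -> t1 < t2 -> t2 <= tls -> Psi t1 < Psi t2).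
    { intros t1 t2 Ha Hab Hb.
      destruct (kr t1) as [k1a k1b]; [lra|]. destruct (kr t2) as [k2a k2b]; [lra|].
      assert (kc t2 <= kc t1) by (apply kmono; lra).
      assert (m (kc t2) <= m (kc t1)) by (apply mmono; lra).
      destruct (mvAl t1 t2) as [c [Hc E]]; try lra.
      destruct (mslope (kc t2)) as [c2 [Hc2 E2]]; try lra.
      assert (Derive p c < Derive p c2) by (apply H5'; lra).
      assert (0 <= (m (kc t1) - m (kc t2)) * (tR - t1)) by (apply Rmult_le_pos; lra).
      assert (0 < (t2 - t1) * (m (kc t2) - Derive p c)) by (apply Rmult_lt_0_compat; lra).
      unfold Psi. nra. }
    assert (Psc : Psi tlsc < 0).
    { unfold Psi. rewrite Hkcsc.
      destruct (mslope tvsc) as [c [Hc E]]; try lra.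
      assert (Derive p tvsc < Derive p c) by (apply pinc; lra).
      assert (Em : p tR - p tvsc = m tvsc * (tR - tvsc)) by (unfold m; field; lra).
      assert (0 < (Derive p c - Derive p tvsc) * (tvsc - tlsc)) by (apply Rmult_lt_0_compat; lra).
      rewrite E in Em |- *. nra. }
    assert (Psat : 0 < Psi tls).
    { unfold Psi. rewrite Hkcsat.
      destruct (mslope tvs) as [c [Hc E]]; try lra.
      assert (Derive p c < 0) by (apply H1; right; unfold Av; lra).
      assert (Em : p tR - p tvs = m tvs * (tR - tvs)) by (unfold m; field; lra).
      assert (0 < (- m tvs) * (tvs - tls)) by (apply Rmult_lt_0_compat; lra).
      nra. }
    assert (eqv : forall t, tlsc <= t <= tls ->
      (Psi t = 0 <-> (p (kc t) - p t - z) / (kc t - t) = (p tR - p t - z) / (tR - t))).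
    { intros t Ht. destruct (kr t) as [k1 k2]; auto. unfold Psi, m.
      apply alg_equiv; lra. }
    destruct (ivt_loc Psi tlsc tls) as [tc [Htc Hpz]]; try lra.
    { intros x Hx. destruct (kr x) as [k1 k2]; auto.
      assert (ex_derive kc x) by (apply (Hkc x); lra).
      assert (ex_derive p (kc x)) by (apply dAv; lra).
      assert (ex_derive p x) by (apply dAl; lra).
      assert (tR - kc x <> 0) by lra.
      unfold Psi, m. auto_derive. tauto. }
    assert (tc <> tlsc) by (intro E; rewrite E in Hpz; lra).
    assert (tc <> tls) by (intro E; rewrite E in Hpz; lra).
    exists tc. split; [split; [auto| apply eqv; auto]|split; [|lra]].
    intros t Ht E. apply eqv in E; auto.
    destruct (Rtotal_order t tc) as [L|[L|L]]; auto.
    + assert (Psi t < Psi tc) by (apply Pmono; lra). lra.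
    + assert (Psi tc < Psi t) by (apply Pmono; lra). lra.
Qed.
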